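(* Let $n\ge 3$, let $\{(M_i,g_i)\}_{i\ge1}$ be a sequence in $\mathcal{RotSym}_n$ with graphical representatives $f_i$, all defined on $[a_0,\infty)$ for some $a_0>0$, and suppose $f_i(r)\to f(r)$ for every $r\ge a_0$, for some function $f:[a_0,\infty)\to\mathbb{R}$. If $r_0\in(a_0,\infty)$ and $f$ is differentiable at $r_0$, then $\lim_{i\to\infty}f_i'(r_0)=f'(r_0)$.
   Context: $\mathcal{RotSym}_n$ is the class of smooth Riemannian $n$-manifolds $(M,g)$ with $g=ds^2+h(s)^2g_{S^{n-1}}$, $h:[0,\infty)\to[0,\infty)$ smooth, such that either $h(0)=0,h'(0)=1$ or $h(0)>0,h'(0)=0$; $h'(s)>0$ for $s>0$; $h(s)\to\infty$; and $g$ has nonnegative scalar curvature. A graphical representative is a radial function $f(r)$, $r=|\vec x|\ge h(0)$, continuous and smooth in the interior, whose graph in $\mathbb{R}^{n+1}$ with induced Euclidean metric is isometric to $(M,g)$. For such $f$, the function $r\mapsto r^{n-2}\frac{f'(r)^2}{1+f'(r)^2}$ (twice the Hawking mass of the sphere over $|\vec x|=r$) is nondecreasing and $f'\ge 0$. *)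

(* Defs.v *)
From Stdlib Require Import Reals Lra.
From Coquelicot Require Import Coquelicot.
Open Scope R_scope.

Definition smooth (f : R -> R) : Prop :=
  forall (k : nat) (x : R), ex_derive_n f k x.

Definition smooth_on_open (a : R) (f : R -> R) : Prop :=
  forall (k : nat) (x : R), a < x -> ex_derive_n f k x.

Definition continuous_on_closed (a : R) (f : R -> R) : Prop :=
  forall r : R, a <= r ->
    filterlim f (within (fun x => a <= x) (locally r)) (locally (f r)).

(* Scalar curvature of g = ds^2 + h(s)^2 g_{S^{n-1}} at s (s > 0, h(s) > 0). *)
Definition scal_warped (n : nat) (h : R -> R) (s : R) : R :=
  - 2 * (INR n - 1) * Derive_n h 2 s / h s
  + (INR n - 1) * (INR n - 2) * (1 - (Derive h s) ^ 2) / (h s) ^ 2.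

(* The class RotSym_n, described by the warping function h
   (only its values on [0,+oo) matter). *)
Definition RotSym (n : nat) (h : R -> R) : Prop :=
  (* h smooth on [0,oo): realized as restriction of a smooth function on R *)
  smooth h /\
  (forall s, 0 <= s -> 0 <= h s) /\
  (* either a pole (with smoothness of the metric at the pole: h odd to all
     orders at 0) or a minimal boundary sphere *)
  ((h 0 = 0 /\ Derive h 0 = 1 /\ (forall k : nat, Derive_n h (2 * k) 0 = 0))
   \/ (h 0 > 0 /\ Derive h 0 = 0)) /\
  (forall s, 0 < s -> Derive h s > 0) /\
  is_lim h p_infty p_infty /\
  (* nonnegative scalar curvature (on s > 0; at s = 0 it follows by continuity) *)
  (forall s, 0 < s -> 0 <= scal_warped n h s).

(* f is a graphical representative of (M, g) = ([0,oo) x S^{n-1},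
   ds^2 + h^2 g_S): the radial graph r |-> f(|x|), r >= h(0), with induced
   metric (1 + f'(r)^2) dr^2 + r^2 g_S, is isometric to g via r = h(s),
   i.e. (1 + f'(h s)^2) h'(s)^2 = 1 for s > 0; normalized with f' >= 0. *)
Definition graph_rep (h f : R -> R) : Prop :=
  continuous_on_closed (h 0) f /\
  smooth_on_open (h 0) f /\
  (forall s, 0 < s -> (1 + (Derive f (h s)) ^ 2) * (Derive h s) ^ 2 = 1) /\
  (forall r, h 0 < r -> 0 <= Derive f r).

(* Main.v *)
Require Import Defs.
From Stdlib Require Import Reals Lra Lia.
From Coquelicot Require Import Coquelicot.
Open Scope R_scope.

Definition phi (x : R) := x ^ 2 / (1 + x ^ 2).

Lemma phi_lt x y : 0 <= x -> x < y -> phi x < phi y.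
Proof.
  intros Hx Hxy. unfold phi.
  assert (0 < 1 + x^2) by nra. assert (0 < 1 + y^2) by nra.
  apply (Rmult_lt_reg_r ((1+x^2)*(1+y^2))). nra.
  replace (x ^ 2 / (1 + x ^ 2) * ((1 + x ^ 2) * (1 + y ^ 2))) with (x^2 * (1+y^2)) by (field; lra).
  replace (y ^ 2 / (1 + y ^ 2) * ((1 + x ^ 2) * (1 + y ^ 2))) with (y^2 * (1+x^2)) by (field; lra).
  nra.
Qed.

Lemma phi_le_inv x y : 0 <= x -> phi x <= phi y -> 0 <= y -> x <= y.
Proof.
  intros Hx H Hy. destruct (Rle_lt_dec x y) as [|Hl]; auto.
  apply phi_lt in Hl; auto. lra.
Qed.

Lemma phi_pos x : 0 < x -> 0 < phi x.
Proof. intros. unfold phi. apply Rdiv_lt_0_compat; nra. Qed.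

Lemma pow_cont (k : nat) (r0 eps : R) : 0 < eps ->
  exists d, 0 < d /\ forall r, Rabs (r - r0) < d -> Rabs (r ^ k - r0 ^ k) < eps.
Proof.
  intros He.
  assert (H : continuity_pt (fun r => r ^ k) r0).
  { apply continuity_pt_filterlim. apply (ex_derive_continuous (fun r => r ^ k)). auto_derive. auto. }
  unfold continuity_pt, continue_in, limit1_in, limit_in in H.
  destruct (H eps He) as [d [Hd Hr]]. exists d. split; auto.
  intros r Hr'. destruct (Req_dec r r0) as [->|Hne].
  - rewrite Rminus_diag, Rabs_R0. auto.
  - apply (Hr r). split. split. exact I. auto. exact Hr'.
Qed.

Lemma smooth_deriv h : smooth h -> forall x, is_derive h x (Derive h x).
Proof. intros Hs x. apply Derive_correct. exact (Hs 1%nat x). Qed.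

Lemma smooth_deriv2 h : smooth h -> forall x, is_derive (Derive h) x (Derive_n h 2 x).
Proof. intros Hs x. apply Derive_correct. exact (Hs 2%nat x). Qed.

Lemma is_derive_cont f x l : is_derive f x l -> continuity_pt f x.
Proof. intros H. apply continuity_pt_filterlim. apply (ex_derive_continuous f). exists l. exact H. Qed.

Lemma M_deriv (h : R -> R) (k:nat) s : ex_derive h s -> ex_derive (Derive h) s ->
  is_derive (fun s => h s ^ S k * (1 - Derive h s ^ 2)) s
   (h s ^ k * Derive h s * (INR (S k) * (1 - Derive h s ^ 2) - 2 * h s * Derive (Derive h) s)).
Proof.
intros H1 H2.
auto_derive. tauto. rewrite S_INR. simpl pred. replace (match k with 0%nat => 1 | S _ => INR k + 1 end) with (INR k + 1) by (destruct k; simpl; ring). change (Derive (fun x : R => h x)) with (Derive h). change (Derive (fun x : R => Derive h x)) with (Derive (Derive h)). ring.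
Qed.

Lemma mass_mono n h g : (3 <= n)%nat -> RotSym n h -> graph_rep h g ->
  forall r1 r2, h 0 < r1 -> r1 <= r2 ->
  r1 ^ (n-2) * phi (Derive g r1) <= r2 ^ (n-2) * phi (Derive g r2).
Proof.
  intros Hn [Hsm [Hnn [H0 [Hpos [Hlim Hscal]]]]] [_ [_ [Hid _]]] r1 r2 Hr1 Hr12.
  assert (Dh := smooth_deriv h Hsm).
  assert (D2h := smooth_deriv2 h Hsm).
  assert (Ch : continuity h) by (intro x; exact (is_derive_cont _ _ _ (Dh x))).
  assert (Hdn : forall s, 0 <= s -> 0 <= Derive h s).
  { intros s Hs. destruct (Req_dec s 0) as [->|Hs0].
    - destruct H0 as [[_ [-> _]]|[_ ->]]; lra.
    - left. apply Hpos. lra. }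
  assert (Hmono : forall s1 s2, 0 <= s1 -> s1 < s2 -> h s1 < h s2).
  { intros s1 s2 H1 H2.
    destruct (MVT_gen h s1 ((s1+s2)/2) (Derive h)) as [c [Hc Eq1]].
    { intros; apply Dh. } { intros; apply Ch. }
    destruct (MVT_gen h ((s1+s2)/2) s2 (Derive h)) as [d [Hd Eq2]].
    { intros; apply Dh. } { intros; apply Ch. }
    rewrite Rmin_left in Hc by lra. rewrite Rmax_right in Hc by lra.
    rewrite Rmin_left in Hd by lra. rewrite Rmax_right in Hd by lra.
    assert (0 <= Derive h c) by (apply Hdn; lra).
    assert (0 < Derive h d) by (apply Hpos; lra).
    assert (0 <= Derive h c * ((s1+s2)/2 - s1)) by (apply Rmult_le_pos; lra).
    assert (0 < Derive h d * (s2 - (s1+s2)/2)) by (apply Rmult_lt_0_compat; lra).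
    lra. }
  assert (Hh0 := Hnn 0 (Rle_refl 0)).
  assert (Hhp : forall s, 0 < s -> 0 < h s).
  { intros s Hs. assert (h 0 < h s) by (apply Hmono; lra). lra. }
  assert (Hpre : forall r, h 0 < r -> exists s, 0 < s /\ h s = r).
  { intros r Hr. apply is_lim_spec in Hlim. destruct (Hlim r) as [M HM].
    set (S := Rmax 1 (M+1)).
    assert (HS : r < h S) by (apply HM; unfold S; generalize (Rmax_r 1 (M+1)); lra).
    assert (H0S : 0 < S) by (unfold S; generalize (Rmax_l 1 (M+1)); lra).
    destruct (IVT_gen h 0 S r Ch) as [x [Hx Hxr]].
    { rewrite Rmin_left by lra. rewrite Rmax_right by lra. lra. }
    rewrite Rmin_left in Hx by lra. rewrite Rmax_right in Hx by lra.
    exists x. split; auto. destruct (Req_dec x 0) as [->|]; [lra|lra]. }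
  assert (Hj : exists j, n = (j+3)%nat) by (exists (n-3)%nat; lia).
  destruct Hj as [j ->].
  replace (j+3-2)%nat with (S j) by lia.
  assert (Hbr : forall s, 0 < s -> 0 <= INR (S j) * (1 - Derive h s ^ 2) - 2 * h s * Derive (Derive h) s).
  { intros s Hs. specialize (Hscal s Hs). unfold scal_warped in Hscal.
    replace (INR (j+3)) with (INR j + 3) in Hscal by (rewrite plus_INR; simpl; ring).
    change (Derive_n h 2 s) with (Derive (Derive h) s) in Hscal.
    rewrite S_INR. assert (hs := Hhp s Hs). assert (Jpos := pos_INR j).
    set (D := Derive h s) in *. set (D2 := Derive (Derive h) s) in *.
    replace ((INR j + 1) * (1 - D ^ 2) - 2 * h s * D2) with
      ((- 2 * (INR j + 3 - 1) * D2 / h s + (INR j + 3 - 1) * (INR j + 3 - 2) * (1 - D ^ 2) / h s ^ 2) * h s ^ 2 / (INR j + 2))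
      by (field; lra).
    apply Rdiv_le_0_compat; [apply Rmult_le_pos; [exact Hscal| nra] | lra]. }
  set (Mf := fun s => h s ^ S j * (1 - Derive h s ^ 2)).
  assert (HM : forall s1 s2, 0 < s1 -> s1 <= s2 -> Mf s1 <= Mf s2).
  { intros s1 s2 Hs1 Hs12. destruct (Req_dec s1 s2) as [<-|Hne]; [lra|].
    destruct (MVT_gen Mf s1 s2 (fun s => h s ^ j * Derive h s * (INR (S j) * (1 - Derive h s ^ 2) - 2 * h s * Derive (Derive h) s))) as [c [Hc Eq]].
    { intros x _. apply M_deriv. eexists; apply Dh. eexists; apply D2h. }
    { intros x _. eapply is_derive_cont. apply M_deriv. eexists; apply Dh. eexists; apply D2h. }
    rewrite Rmin_left in Hc by lra. rewrite Rmax_right in Hc by lra.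
    cbv beta in Eq.
    assert (0 <= h c ^ j * Derive h c * (INR (S j) * (1 - Derive h c ^ 2) - 2 * h c * Derive (Derive h) c)).
    { apply Rmult_le_pos; [apply Rmult_le_pos|].
      - apply pow_le. left. apply Hhp. lra.
      - apply Hdn. lra.
      - apply Hbr. lra. }
    assert (0 <= h c ^ j * Derive h c * (INR (S j) * (1 - Derive h c ^ 2) - 2 * h c * Derive (Derive h) c) * (s2 - s1)) by (apply Rmult_le_pos; lra).
    lra. }
  destruct (Hpre r1 Hr1) as [s1 [Hs1 E1]].
  destruct (Hpre r2 ltac:(lra)) as [s2 [Hs2 E2]].
  assert (s1 <= s2).
  { destruct (Rle_lt_dec s1 s2) as [|Hlt]; auto. assert (h s2 < h s1) by (apply Hmono; lra). lra. }
  assert (Hphi : forall s, 0 < s -> phi (Derive g (h s)) = 1 - Derive h s ^ 2).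
  { intros s Hs. specialize (Hid s Hs). set (F := Derive g (h s)) in *. set (D := Derive h s) in *.
    unfold phi. assert (0 < 1 + F^2) by nra. apply (Rmult_eq_reg_r (1+F^2)); [|lra].
    replace (F^2/(1+F^2)*(1+F^2)) with (F^2) by (field; lra). nra. }
  rewrite <- E1, <- E2, !Hphi by auto. apply HM; auto.
Qed.

Lemma mvt_bounds g u v : u < v -> (forall r, u <= r <= v -> ex_derive g r) ->
  exists c, u <= c <= v /\ g v - g u = Derive g c * (v - u).
Proof.
  intros Huv Hd. destruct (MVT_gen g u v (Derive g)) as [c [Hc Eq]].
  - intros x Hx. rewrite Rmin_left in Hx by lra. rewrite Rmax_right in Hx by lra.
    apply Derive_correct, Hd; lra.
  - intros x Hx. rewrite Rmin_left in Hx by lra. rewrite Rmax_right in Hx by lra.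
    apply (is_derive_cont _ _ (Derive g x)). apply Derive_correct, Hd; lra.
  - rewrite Rmin_left in Hc by lra. rewrite Rmax_right in Hc by lra. exists c; auto.
Qed.

Lemma analytic (k : nat) (g : nat -> R -> R) (F : R -> R) (a r0 : R) :
  0 < a -> a < r0 ->
  (forall i r, a < r -> ex_derive (g i) r) ->
  (forall i r, a < r -> 0 <= Derive (g i) r) ->
  (forall i r1 r2, a < r1 -> r1 <= r2 -> r1^k * phi (Derive (g i) r1) <= r2^k * phi (Derive (g i) r2)) ->
  (forall r, a < r -> is_lim_seq (fun i => g i r) (F r)) ->
  ex_derive F r0 ->
  is_lim_seq (fun i => Derive (g i) r0) (Derive F r0).
Proof.
  intros Ha Har Hd Hnn Hmass Hlim HF.
  set (L := Derive F r0).
  assert (HL : derivable_pt_lim F r0 L) by (apply is_derive_Reals, Derive_correct, HF).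
  assert (Hdiff : forall u v, a < u -> a < v -> is_lim_seq (fun i => g i v - g i u) (F v - F u)).
  { intros u v Hu Hv. apply is_lim_seq_minus'; apply Hlim; auto. }
  assert (Hev : forall u v c, a < u -> a < v -> F v - F u < c -> eventually (fun i => g i v - g i u < c)).
  { intros u v c Hu Hv Hc. pose proof (Hdiff u v Hu Hv) as H. apply is_lim_seq_spec in H.
    destruct (H (mkposreal _ (proj2 (Rlt_0_minus _ _) Hc))) as [N HN]. exists N. intros i Hi.
    specialize (HN i Hi). simpl in HN. apply Rabs_def2 in HN. lra. }
  assert (Hev' : forall u v c, a < u -> a < v -> c < F v - F u -> eventually (fun i => c < g i v - g i u)).
  { intros u v c Hu Hv Hc. pose proof (Hdiff u v Hu Hv) as H. apply is_lim_seq_spec in H.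
    destruct (H (mkposreal _ (proj2 (Rlt_0_minus _ _) Hc))) as [N HN]. exists N. intros i Hi.
    specialize (HN i Hi). simpl in HN. apply Rabs_def2 in HN. lra. }
  assert (Hr0k : 0 < r0 ^ k) by (apply pow_lt; lra).
  assert (HL0 : 0 <= L).
  { destruct (Rle_lt_dec 0 L) as [|Hneg]; auto. exfalso.
    destruct (HL (-L/2) ltac:(lra)) as [d Hdl].
    set (t := Rmin (d/2) 1).
    assert (Ht : 0 < t /\ t < d) by (unfold t; destruct d as [d dpos]; simpl;
      split; [apply Rmin_glb_lt; lra | generalize (Rmin_l (d/2) 1); lra]).
    specialize (Hdl t ltac:(lra) ltac:(rewrite Rabs_right; lra)).
    apply Rabs_def2 in Hdl.
    assert (Hq : (F (r0 + t) - F r0) / t < 0) by lra.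
    assert (HFd : F (r0 + t) - F r0 < 0).
    { replace (F (r0 + t) - F r0) with (((F (r0 + t) - F r0) / t) * t) by (field; lra). nra. }
    destruct (Hev r0 (r0+t) 0 Har ltac:(lra) HFd) as [N HN].
    specialize (HN N (le_n N)).
    destruct (mvt_bounds (g N) r0 (r0+t)) as [c [Hc Eq]]; [lra| intros; apply Hd; lra|].
    assert (0 <= Derive (g N) c) by (apply Hnn; lra). nra. }
  assert (Hup : forall e, 0 < e -> eventually (fun i => Derive (g i) r0 <= L + e)).
  { intros e He.
    set (A := phi (L + e/2)). set (B := phi (L + e)).
    assert (HA : 0 < A) by (apply phi_pos; lra).
    assert (HAB : A < B) by (apply phi_lt; lra).
    destruct (pow_cont k r0 (r0^k*(B-A)/A)) as [d1 [Hd1 Hp]].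
    { apply Rdiv_lt_0_compat; [apply Rmult_lt_0_compat|]; lra. }
    destruct (HL (e/4) ltac:(lra)) as [d2 Hd2].
    set (t := Rmin d1 d2 / 2).
    assert (Ht : 0 < t /\ t < d1 /\ t < d2).
    { unfold t; destruct d2 as [d2 d2pos]; simpl.
      generalize (Rmin_l d1 d2) (Rmin_r d1 d2); intros.
      assert (0 < Rmin d1 d2) by (apply Rmin_glb_lt; lra). lra. }
    specialize (Hd2 t ltac:(lra) ltac:(rewrite Rabs_right; lra)).
    apply Rabs_def2 in Hd2.
    assert (HFd : F (r0 + t) - F r0 < t * (L + e/2)).
    { replace (F (r0 + t) - F r0) with (((F (r0 + t) - F r0) / t) * t) by (field; lra). nra. }
    destruct (Hev r0 (r0+t) _ Har ltac:(lra) HFd) as [N HN].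
    exists N. intros i Hi. specialize (HN i Hi).
    destruct (Rle_lt_dec (Derive (g i) r0) (L+e)) as [|Hbig]; [lra|exfalso].
    assert (HB : B < phi (Derive (g i) r0)) by (apply phi_lt; lra).
    assert (Hlow : forall r, r0 <= r <= r0+t -> L + e/2 <= Derive (g i) r).
    { intros r Hr. apply phi_le_inv; [lra| |apply Hnn; lra].
      fold A.
      destruct (Rle_lt_dec A (phi (Derive (g i) r))) as [|Hs]; auto. exfalso.
      pose proof (Hmass i r0 r Har (proj1 Hr)) as Hm.
      assert (Hrk : Rabs (r^k - r0^k) < r0^k*(B-A)/A) by (apply Hp; rewrite Rabs_right; lra).
      apply Rabs_def2 in Hrk.
      assert (Hrk0 : 0 < r ^ k) by (apply pow_lt; lra).
      assert (H1 : r^k * phi (Derive (g i) r) < r^k * A) by (apply Rmult_lt_compat_l; lra).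
      assert (H2 : r^k * A < r0^k * B).
      { assert (r^k * A < (r0^k + r0^k*(B-A)/A) * A) by (apply Rmult_lt_compat_r; lra).
        replace ((r0^k + r0^k*(B-A)/A) * A) with (r0^k * B) in H by (field; lra). lra. }
      assert (H3 : r0^k * B < r0^k * phi (Derive (g i) r0)) by (apply Rmult_lt_compat_l; lra).
      lra. }
    destruct (mvt_bounds (g i) r0 (r0+t)) as [c [Hc Eq]]; [lra| intros; apply Hd; lra|].
    specialize (Hlow c Hc).
    assert ((L + e/2) * t <= Derive (g i) c * t) by (apply Rmult_le_compat_r; lra).
    replace (r0 + t - r0) with t in Eq by ring. lra. }
  assert (Hlo : forall e, 0 < e -> eventually (fun i => L - e <= Derive (g i) r0)).
  { intros e He. destruct (Rle_lt_dec (L - e) 0) as [Hle|Hgt].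
    { exists 0%nat. intros i _. specialize (Hnn i r0 Har). lra. }
    set (A := phi (L - e)). set (B := phi (L - e/2)).
    assert (HA : 0 < A) by (apply phi_pos; lra).
    assert (HAB : A < B) by (apply phi_lt; lra).
    destruct (pow_cont k r0 (r0^k*(B-A)/B)) as [d1 [Hd1 Hp]].
    { apply Rdiv_lt_0_compat; [apply Rmult_lt_0_compat|]; lra. }
    destruct (HL (e/4) ltac:(lra)) as [d2 Hd2].
    set (t := Rmin (Rmin d1 d2) (r0 - a) / 2).
    assert (Ht : 0 < t /\ t < d1 /\ t < d2 /\ t < r0 - a).
    { unfold t; destruct d2 as [d2 d2pos]; simpl.
      generalize (Rmin_l d1 d2) (Rmin_r d1 d2) (Rmin_l (Rmin d1 d2) (r0 - a)) (Rmin_r (Rmin d1 d2) (r0 - a)); intros.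
      assert (0 < Rmin d1 d2) by (apply Rmin_glb_lt; lra).
      assert (0 < Rmin (Rmin d1 d2) (r0 - a)) by (apply Rmin_glb_lt; lra). lra. }
    specialize (Hd2 (-t) ltac:(lra) ltac:(rewrite Rabs_left; lra)).
    apply Rabs_def2 in Hd2.
    replace (r0 + - t) with (r0 - t) in Hd2 by ring.
    assert (HFd : t * (L - e/2) < F r0 - F (r0 - t)).
    { replace (F r0 - F (r0 - t)) with (((F (r0 - t) - F r0) / - t) * t) by (field; lra). nra. }
    destruct (Hev' (r0 - t) r0 _ ltac:(lra) Har HFd) as [N HN].
    exists N. intros i Hi. specialize (HN i Hi).
    destruct (Rle_lt_dec (L - e) (Derive (g i) r0)) as [|Hsmall]; [lra|exfalso].
    assert (Hx0 : 0 <= Derive (g i) r0) by (apply Hnn; lra).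
    assert (HA' : phi (Derive (g i) r0) < A) by (apply phi_lt; lra).
    assert (Hhi : forall r, r0 - t <= r <= r0 -> Derive (g i) r <= L - e/2).
    { intros r Hr. apply phi_le_inv; [apply Hnn; lra| |lra].
      fold B.
      destruct (Rle_lt_dec (phi (Derive (g i) r)) B) as [|Hs]; auto. exfalso.
      pose proof (Hmass i r r0 ltac:(lra) (proj2 Hr)) as Hm.
      assert (Hrk : Rabs (r^k - r0^k) < r0^k*(B-A)/B) by (apply Hp; rewrite Rabs_left1; lra).
      apply Rabs_def2 in Hrk.
      assert (Hrk0 : 0 < r ^ k) by (apply pow_lt; lra).
      assert (H1 : r^k * B < r^k * phi (Derive (g i) r)) by (apply Rmult_lt_compat_l; lra).
      assert (H2 : r0^k * A < r^k * B).
      { assert ((r0^k - r0^k*(B-A)/B) * B < r^k * B) by (apply Rmult_lt_compat_r; lra).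
        replace ((r0^k - r0^k*(B-A)/B) * B) with (r0^k * A) in H by (field; lra). lra. }
      assert (H3 : r0^k * phi (Derive (g i) r0) < r0^k * A) by (apply Rmult_lt_compat_l; lra).
      lra. }
    destruct (mvt_bounds (g i) (r0 - t) r0) as [c [Hc Eq]]; [lra| intros; apply Hd; lra|].
    specialize (Hhi c Hc).
    assert (Derive (g i) c * t <= (L - e/2) * t) by (apply Rmult_le_compat_r; lra).
    replace (r0 - (r0 - t)) with t in Eq by ring. lra. }
  apply is_lim_seq_spec. intros eps.
  destruct (Hup (eps/2) ltac:(destruct eps; simpl; lra)) as [N1 H1].
  destruct (Hlo (eps/2) ltac:(destruct eps; simpl; lra)) as [N2 H2].
  exists (max N1 N2). intros i Hi.
  specialize (H1 i ltac:(lia)). specialize (H2 i ltac:(lia)).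
  destruct eps as [eps epos]; simpl in *.
  apply Rabs_def1; fold L; lra.
Qed.

Theorem lemma4p3 (n : nat) (hn : (3 <= n)%nat)
  (h : nat -> R -> R) (f : nat -> R -> R) (a0 : R) (flim : R -> R) (r0 : R) :
  0 < a0 ->
  (forall i : nat, RotSym n (h i)) ->
  (forall i : nat, graph_rep (h i) (f i)) ->
  (forall i : nat, h i 0 <= a0) ->
  (forall r : R, a0 <= r -> is_lim_seq (fun i => f i r) (flim r)) ->
  a0 < r0 ->
  ex_derive flim r0 ->
  is_lim_seq (fun i => Derive (f i) r0) (Derive flim r0).
Proof.
  intros Ha Hrot Hgr Hh0 Hlim Hr0 HF.
  apply (analytic (n-2) f flim a0 r0); auto.
  - intros i r Hr. destruct (Hgr i) as [_ [Hs _]]. exact (Hs 1%nat r ltac:(specialize (Hh0 i); lra)).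
  - intros i r Hr. destruct (Hgr i) as [_ [_ [_ Hp]]]. apply Hp. specialize (Hh0 i); lra.
  - intros i r1 r2 Hr1 Hr12. apply (mass_mono n (h i)); auto. specialize (Hh0 i); lra.
  - intros r Hr. apply Hlim. lra.
Qed.
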